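(* For every $N\ge 2$ and every $x\in\{0,\dots,N-2\}$, $$|2p(x)-1|\le 3\,\frac{N-x-1}{(N-x)!}\le\frac{3}{(N-x-1)!}.$$ In particular, if $N\ge 4$, then $\frac14\le p(x)\le\frac34$ for all $x\in\{0,\dots,N-4\}$.
   Context: For $\sigma\in\mathcal{S}_N$, $\eta_1(\sigma)$ is the number of fixed points and $\eta_2(\sigma)$ the number of 2-cycles of $\sigma$; $\nu$ is the uniform measure on $\mathcal{S}_N$, and for $x\in\{0,\dots,N\}\setminus\{N-1\}$, $p(x)=\mathbb{E}_\nu[\eta_2\mid\eta_1=x]$. *)

(* Defs.v *)
From mathcomp Require Import all_boot all_order all_algebra all_fingroup.
Set Implicit Arguments. Unset Strict Implicit. Unset Printing Implicit Defensive.
Import Order.TTheory GRing.Theory Num.Theory.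

Definition eta1 (N : nat) (s : 'S_N) : nat := #|[set i | s i == i]|.

Definition eta2 (N : nat) (s : 'S_N) : nat :=
  #|[set C in porbits s | #|C| == 2]|.

(* p N x = E_nu[eta2 | eta1 = x] under the uniform measure nu on S_N:
   the average of eta2 over the permutations with exactly x fixed points. *)
Definition p {R : realFieldType} (N x : nat) : R :=
  ((\sum_(s : 'S_N | eta1 s == x) (eta2 s)%:R) /
   (#|[set s : 'S_N | eta1 s == x]|)%:R)%R.

(* Main.v *)
Require Import Defs.
From mathcomp Require Import all_boot all_order all_algebra all_fingroup.
From mathcomp Require Import zify ring lra.

Module Aux.
Set Implicit Arguments. Unset Strict Implicit. Unset Printing Implicit Defensive.
Definition supp {N : nat} (s : 'S_N) : {set 'I_N} := [set i | s i != i].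

Lemma setU2_eq (T : finType) (A S : {set T}) a b :
  a \in S -> b \in S -> a \notin A -> b \notin A ->
  (a |: (b |: A) == S) = (A == S :\ a :\ b).
Proof.
move=> aS bS aA bA; apply/eqP/eqP => [<-|->]; apply/setP => i; rewrite !inE.
  case: (boolP (i == a)) => [/eqP->|ia]; [|case: (boolP (i == b)) => [/eqP->|ib]];
  rewrite ?eqxx ?(negPf aA) ?(negPf bA) ?(negPf ia) ?(negPf ib) ?andbF //=.
case: (boolP (i == a)) => [/eqP->|ia]; [|case: (boolP (i == b)) => [/eqP->|ib]];
  rewrite ?eqxx ?aS ?bS ?(negPf ia) ?(negPf ib) ?orbT //=.
Qed.

Lemma setU1_eq (T : finType) (A S : {set T}) a :
  a \in S -> a \notin A -> (a |: A == S) = (A == S :\ a).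
Proof.
move=> aS aA; apply/eqP/eqP => [<-|->]; apply/setP => i; rewrite !inE.
  case: (boolP (i == a)) => [/eqP->|ia]; rewrite ?eqxx ?(negPf aA) ?(negPf ia) //=.
case: (boolP (i == a)) => [/eqP->|ia]; rewrite ?eqxx ?aS ?(negPf ia) //=.
Qed.

Lemma supp_tp1 {N} (s : 'S_N) a b : a != b -> s a = a -> s b = b ->
  supp (s * tperm a b) = a |: (b |: supp s).
Proof.
move=> ab sa sb; apply/setP => i; rewrite !inE permM.
case: (eqVneq i a) => [->|ia]; first by rewrite sa tpermL eq_sym ab.
case: (eqVneq i b) => [->|ib]; first by rewrite sb tpermR ab.
rewrite tpermD //.
- by apply: contra ia => /eqP e; apply/eqP; apply: (@perm_inj _ s); rewrite sa.
- by apply: contra ib => /eqP e; apply/eqP; apply: (@perm_inj _ s); rewrite sb.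
Qed.

Lemma supp_tp2 {N} (s : 'S_N) a b : a != b -> s a = a -> s b != b ->
  supp (s * tperm a b) = a |: supp s.
Proof.
move=> ab sa sb; apply/setP => i; rewrite !inE permM.
case: (eqVneq i a) => [->|ia]; first by rewrite sa tpermL eq_sym ab.
case: (eqVneq (s i) b) => [e|ib].
  rewrite e tpermR /= eq_sym ia; apply/esym/negP => /eqP ebi.
  by move: sb; rewrite {1}ebi e eqxx.
rewrite tpermD 1?(eq_sym b) //.
by apply: contra ia => /eqP e; apply/eqP; apply: (@perm_inj _ s); rewrite sa.
Qed.

Definition dS {N : nat} (S : {set 'I_N}) : nat := \sum_(s : 'S_N | supp s == S) 1.

Lemma tpE1 {N} (s : 'S_N) a b : (tperm a b (s a) == b) = (s a == a).
Proof. by rewrite -{2}(tpermL a b) (inj_eq (@perm_inj _ _)). Qed.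
Lemma tpE2 {N} (s : 'S_N) a b : (tperm a b (s b) == a) = (s b == b).
Proof. by rewrite -{2}(tpermR a b) (inj_eq (@perm_inj _ _)). Qed.

Lemma not_supp_eq {N} (s : 'S_N) (T : {set 'I_N}) x : s x != x -> x \notin T -> (supp s == T) = false.
Proof. by move=> h hT; apply/negP => /eqP e; move: hT; rewrite -e inE h. Qed.

Lemma cnt_pair {N} (S : {set 'I_N}) a b : a != b -> a \in S -> b \in S ->
  \sum_(s : 'S_N | (supp s == S) && (s a == b) && (s b == a)) 1 = dS (S :\ a :\ b).
Proof.
move=> ab aS bS; rewrite (reindex_inj (mulIg (tperm a b))) /dS.
apply: eq_bigl => s /=; rewrite !permM tpE1 tpE2.
case: (eqVneq (s a) a) => sa; case: (eqVneq (s b) b) => sb /=.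
- by rewrite supp_tp1 // setU2_eq ?andbT // ?inE ?sa ?sb ?eqxx.
- by rewrite !andbF /= (@not_supp_eq _ _ _ b) // !inE eqxx ?andbF.
- by rewrite !andbF /= (@not_supp_eq _ _ _ a) // !inE eqxx ?andbF.
- by rewrite !andbF /= (@not_supp_eq _ _ _ a) // !inE eqxx ?andbF.
Qed.

Lemma cnt_nopair {N} (S : {set 'I_N}) a b : a != b -> a \in S -> b \in S ->
  \sum_(s : 'S_N | (supp s == S) && (s a == b) && ~~ (s b == a)) 1 = dS (S :\ a).
Proof.
move=> ab aS bS; rewrite (reindex_inj (mulIg (tperm a b))) /dS.
apply: eq_bigl => s /=; rewrite !permM tpE1 tpE2.
case: (eqVneq (s a) a) => sa; case: (eqVneq (s b) b) => sb /=.
- rewrite !andbF /=; apply/esym/negP => /eqP e.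
  have : b \in supp s by rewrite e !inE eq_sym ab bS.
  by rewrite inE sb eqxx.
- by rewrite supp_tp2 ?andbT // setU1_eq // ?inE ?sa ?eqxx.
- by rewrite !andbF /= (@not_supp_eq _ _ _ a) // !inE eqxx ?andbF.
- by rewrite !andbF /= (@not_supp_eq _ _ _ a) // !inE eqxx ?andbF.
Qed.

Lemma supp_img {N} (s : 'S_N) a : a \in supp s -> s a \in supp s :\ a.
Proof.
rewrite !inE => h; by rewrite h /= (inj_eq (@perm_inj _ _)).
Qed.

Lemma dS_rec {N} (S : {set 'I_N}) a : a \in S ->
  dS S = \sum_(b in S :\ a) (dS (S :\ a) + dS (S :\ a :\ b)).
Proof.
move=> aS; rewrite {1}/dS (partition_big (fun s : 'S_N => s a) (fun b => b \in S :\ a)).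
  apply: eq_bigr => b; rewrite !inE => /andP[ba bS].
  by rewrite (bigID (fun s : 'S_N => s b == a)) /= cnt_pair // ?cnt_nopair // 1?eq_sym // addnC.
move=> s /eqP e; rewrite -e; apply: supp_img; by rewrite e.
Qed.

Fixpoint D n := match n with 0 => 1 | 1 => 0 | S (S k as k1) => k1 * (D k1 + D k) end.

Lemma supp0 {N} (s : 'S_N) : (supp s == set0) = (s == 1%g).
Proof.
apply/eqP/eqP => [h|->].
  apply/permP => i; rewrite perm1; apply/eqP.
  by have := in_set0 i; rewrite -h inE => /negbFE.
by apply/setP => i; rewrite !inE perm1 eqxx.
Qed.

Lemma dS0 {N} : dS (set0 : {set 'I_N}) = 1.
Proof. by rewrite /dS (eq_bigl _ _ (@supp0 N)) big_pred1_eq. Qed.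

Lemma dS_D {N} (S : {set 'I_N}) : dS S = D #|S|.
Proof.
suff H : forall k (S : {set 'I_N}), #|S| <= k -> dS S = D #|S| by exact: H _ S (leqnn _).
elim=> [|k IH] {}S.
  by rewrite leqn0 cards_eq0 => /eqP ->; rewrite cards0 dS0.
move=> hS; case: (leqP #|S| k) => [/IH//|lt].
have : 0 < #|S| by lia.
rewrite card_gt0 => /set0Pn [a aS].
rewrite (dS_rec aS).
have cS : #|S :\ a| = k by move: (cardsD1 a S); rewrite aS; lia.
rewrite (eq_bigr (fun _ => D k + D k.-1)).
  rewrite sum_nat_const cS (_ : #|S| = k.+1); last by lia.
  by case: (k).
move=> b bS'; have := cardsD1 b (S :\ a); rewrite bS' cS => cS2.
have cS3 : #|S :\ a :\ b| = k.-1 by lia.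
rewrite !IH ?cS ?cS3 //; lia.
Qed.
Lemma porbit2 {N} (s : 'S_N) a : (#|porbit s a| == 2) = (s a != a) && (s (s a) == a).
Proof.
apply/eqP/andP => [h|[h1 /eqP h2]].
  have U := uniq_traject_porbit s a; rewrite h /= in U.
  have I := iter_porbit s a; rewrite h /= in I.
  split; last by rewrite I.
  by move: U; rewrite inE andbT eq_sym.
have E : porbit s a = [set a; s a].
  apply/setP => y; apply/porbitP/idP.
    case=> i ->; rewrite permX; elim: i => [|i IHi] /=; first by rewrite !inE eqxx.
    by move: IHi; rewrite !inE => /orP[] /eqP ->; rewrite ?h2 eqxx ?orbT.
  rewrite !inE => /orP[/eqP->|/eqP->]; first by exists 0; rewrite expg0 perm1.
  by exists 1; rewrite expg1.
by rewrite E cards2 eq_sym h1.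
Qed.

Lemma eta2E {N} (s : 'S_N) : 2 * eta2 s = #|[set a | #|porbit s a| == 2]|.
Proof.
rewrite -sum1_card.
rewrite (partition_big (porbit s) (fun C => C \in [set C in porbits s | #|C| == 2])) /=.
  rewrite (eq_bigr (fun _ => 2)).
    by rewrite sum_nat_const mulnC.
  move=> C; rewrite inE => /andP[/imsetP[c _ ->] /eqP c2].
  transitivity (\sum_(y in porbit s c) 1); last by rewrite sum1_card c2.
  apply: eq_bigl => y.
  rewrite inE eq_porbit_mem; case yc: (y \in porbit s c); rewrite ?andbF //=.
  by rewrite andbT; move: yc; rewrite -eq_porbit_mem => /eqP ->; rewrite c2.
move=> y; rewrite !inE => h; rewrite h andbT.
by apply: imset_f.
Qed.

Lemma inner {N} (s : 'S_N) a : a \in supp s ->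
  (s (s a) == a : nat) = \sum_(b in supp s :\ a) ((s a == b) && (s b == a) : nat).
Proof.
move=> h; rewrite (bigD1 (s a)) ?supp_img //= eqxx big1 ?addn0 // => b /andP[_ nb].
by rewrite eq_sym (negPf nb).
Qed.

Lemma eta2_sum {N} (s : 'S_N) :
  2 * eta2 s = \sum_(a in supp s) \sum_(b in supp s :\ a) ((s a == b) && (s b == a) : nat).
Proof.
rewrite eta2E -sum1_card.
transitivity (\sum_(a in supp s) (s (s a) == a : nat)).
  rewrite big_mkcond [RHS]big_mkcond; apply: eq_bigr => a _.
  by rewrite !inE porbit2; case: (s a != a); case: (s (s a) == a).
by apply: eq_bigr => a h; rewrite inner.
Qed.

Lemma cnt_pair' {N} (S : {set 'I_N}) a b : a != b -> a \in S -> b \in S ->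
  \sum_(s : 'S_N | supp s == S) ((s a == b) && (s b == a) : nat) = D (#|S| - 2).
Proof.
move=> ab aS bS; rewrite -[X in _ = D X](_ : #|S :\ a :\ b| = _); last first.
  have := cardsD1 a S; have := cardsD1 b (S :\ a); rewrite !inE eq_sym ab aS bS /=; lia.
rewrite -dS_D -cnt_pair // big_mkcond [RHS]big_mkcond; apply: eq_bigr => s _.
by case: (supp s == S); case: (s a == b); case: (s b == a).
Qed.

Lemma sum_eta2_S {N} (S : {set 'I_N}) :
  \sum_(s : 'S_N | supp s == S) 2 * eta2 s = #|S| * ((#|S| - 1) * D (#|S| - 2)).
Proof.
transitivity (\sum_(s : 'S_N | supp s == S) \sum_(a in S) \sum_(b in S :\ a)
   ((s a == b) && (s b == a) : nat)).
  by apply: eq_bigr => s /eqP <-; rewrite eta2_sum.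
rewrite exchange_big /=.
rewrite (eq_bigr (fun _ => (#|S| - 1) * D (#|S| - 2))) ?sum_nat_const //.
move=> a aS; rewrite exchange_big /=.
rewrite (eq_bigr (fun _ => D (#|S| - 2))) ?sum_nat_const.
  by have := cardsD1 a S; rewrite aS => ->; congr (_ * _); rewrite /= add1n subSS subn0.
move=> b; rewrite !inE => /andP[ba bS]; apply: cnt_pair' => //; by rewrite eq_sym.
Qed.

Lemma eta1_supp {N} (s : 'S_N) : eta1 s + #|supp s| = N.
Proof.
rewrite /eta1 (_ : supp s = ~: [set i | s i == i]); first by rewrite cardsC card_ord.
by apply/setP => i; rewrite !inE.
Qed.

Lemma part {N} m (F : 'S_N -> nat) :
  \sum_(s : 'S_N | #|supp s| == m) F s =
  \sum_(S : {set 'I_N} | #|S| == m) \sum_(s : 'S_N | supp s == S) F s.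
Proof.
rewrite (partition_big supp (fun S => #|S| == m)) //.
apply: eq_bigr => S hS; apply: eq_bigl => s.
by case e: (supp s == S); rewrite ?andbF ?andbT // (eqP e).
Qed.

Lemma counts N x : x <= N ->
  #|[set s : 'S_N | eta1 s == x]| =
     #|[set S : {set 'I_N} | #|S| == N - x]| * D (N - x) /\
  2 * \sum_(s : 'S_N | eta1 s == x) eta2 s =
     #|[set S : {set 'I_N} | #|S| == N - x]| * ((N - x) * ((N - x - 1) * D (N - x - 2))).
Proof.
move=> xN.
have E : forall s : 'S_N, (eta1 s == x) = (#|supp s| == N - x).
  by move=> s; have := eta1_supp s; move=> h; apply/eqP/eqP; lia.
split.
  rewrite -sum1_card (eq_bigl (fun s => #|supp s| == N - x)); last by move=> s; rewrite inE E.
  rewrite part (eq_bigr (fun _ => D (N - x))); last by move=> S /eqP <-; rewrite -dS_D.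
  by rewrite -sum1_card big_distrl /= mul1n; apply: eq_bigl => S; rewrite inE.
rewrite big_distrr /= (eq_bigl (fun s => #|supp s| == N - x)) // part.
rewrite (eq_bigr (fun _ => (N - x) * ((N - x - 1) * D (N - x - 2)))).
  by rewrite -sum1_card big_distrl /= mul1n; apply: eq_bigl => S; rewrite inE.
by move=> S /eqP <-; rewrite sum_eta2_S.
Qed.

Lemma D_step n : D n.+1 + odd n.+1 = n.+1 * D n + ~~ odd n.+1.
Proof.
elim: n => [|n IH] //.
rewrite [D n.+2]/= -/(D n.+1).
move: IH; rewrite /=; case: (odd n) => /= IH; nia.
Qed.

Lemma D_even n : ~~ odd n -> D n.+2 + n.+1 = n.+2 * n.+1 * D n.
Proof.
move=> ev; have h1 := D_step n.+1; have h0 := D_step n.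
move: h1 h0; rewrite /= (negPf ev) /=; nia.
Qed.

Lemma D_odd n : odd n -> D n.+2 = n.+2 * n.+1 * D n + n.+1.
Proof.
move=> od; have h1 := D_step n.+1; have h0 := D_step n.
move: h1 h0; rewrite /= od /=; nia.
Qed.

Lemma D_fact n : n.+2`! <= 3 * D n.+2.
Proof.
suff : n.+2`! <= 3 * D n.+2 /\ n.+3`! <= 3 * D n.+3 by case.
elim: n => [|n [IH1 IH2]]; first by [].
split => //.
rewrite [D n.+4]/= -/(D n.+3) -/(D n.+2).
rewrite !factS in IH1 IH2 *.
nia.
Qed.

End Aux.
Import Aux.

Import Order.TTheory GRing.Theory Num.Theory.
Local Open Scope ring_scope.

Lemma core (R : realFieldType) N x : (2 <= N)%N -> (x <= N - 2)%N ->
  (0 < D (N - x))%N /\ `|2 * (p N x : R) - 1| = (N - x - 1)%:R / (D (N - x))%:R.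
Proof.
move=> hN hx.
have xN : (x <= N)%N by lia.
have [hA hB] := counts xN.
set c := #|[set S : {set 'I_N} | #|S| == (N - x)%N]| in hA hB.
set A := #|_| in hA.
set B := (\sum_(s | _) _)%N in hB.
have c0 : (0 < c)%N by rewrite /c card_draws card_ord bin_gt0; lia.
have [n hn] : exists n, (N - x = n.+2)%N by exists (N - x - 2)%N; lia.
rewrite hn in hA hB *.
have D0 : (0 < D n.+2)%N.
  by have := D_fact n; have := fact_gt0 n.+2; lia.
split => //.
rewrite !subSS !subn0 in hB.
have A0 : (A%:R : R) != 0 by rewrite pnatr_eq0 hA muln_eq0 negb_or -!lt0n c0 D0.
have -> : p N x = (B%:R / A%:R : R) by rewrite /p natr_sum.
have -> : 2 * (B%:R / A%:R) - 1 = ((2 * B)%N%:R - A%:R) / (A%:R : R).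
  by rewrite natrM; field.
rewrite normrM normfV (ger0_norm (ler0n _ _)).
have -> : `|(2 * B)%N%:R - (A%:R : R)| = (c * n.+1)%N%:R.
  case: (boolP (odd n)) => od.
    have e : A = (2 * B + c * n.+1)%N.
      by rewrite hA hB D_odd //; move: (D n) => d; nia.
    by rewrite e natrD opprD addrA subrr sub0r normrN ger0_norm ?ler0n.
  have e : (2 * B = A + c * n.+1)%N.
    by rewrite hA hB; have := D_even od; move: (D n) (D n.+2) => d d2 h; nia.
  by rewrite e natrD addrAC subrr add0r ger0_norm ?ler0n.
rewrite hA !natrM subn1 /=.
rewrite -mulf_div divff ?mul1r // pnatr_eq0; lia.
Qed.

Lemma frac_le (R : realFieldType) (a b c d : R) :
  0 < b -> 0 < d -> a * d <= c * b -> a / b <= c / d.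
Proof. by move=> b0 d0 h; rewrite ler_pdivrMr // mulrAC ler_pdivlMr. Qed.

Theorem lemmaB1 (R : realFieldType) :
  (forall N x : nat, (2 <= N)%N -> (x <= N - 2)%N ->
     `|2 * (p N x : R) - 1| <= 3 * (N - x - 1)%:R / ((N - x)`!)%:R /\
     3 * (N - x - 1)%:R / ((N - x)`!)%:R <= 3 / ((N - x - 1)`!)%:R :> R) /\
  (forall N x : nat, (4 <= N)%N -> (x <= N - 4)%N ->
     1 / 4 <= (p N x : R) <= 3 / 4).
Proof.
have three : (3 : R) = 3%:R by [].
split.
  move=> N x hN hx; have [D0 ->] := core R N x hN hx.
  have [n hn] : exists n, (N - x = n.+2)%N by exists (N - x - 2)%N; lia.
  rewrite hn subSS subn0; rewrite three.
  rewrite hn in D0.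
  split; apply: frac_le; rewrite ?ltr0n ?fact_gt0 //.
    rewrite -!natrM ler_nat.
    by have := D_fact n; move: (D n.+2) (n.+2`!) => d f h; nia.
  rewrite -!natrM ler_nat.
  by rewrite [n.+2`!]factS; move: (n.+1`!) => f; nia.
move=> N x hN hx.
have [D0 e] := @core R N x ltac:(lia) ltac:(lia).
have [k hk] : exists k, (N - x = k.+4)%N by exists (N - x - 4)%N; lia.
have h : `|2 * (p N x : R) - 1| <= 1 / 2.
  rewrite hk in D0 e; rewrite e subSS subn0; apply: frac_le; rewrite ?ltr0n //.
  rewrite -[1]/(1%:R) -[2]/(2%:R) -!natrM ler_nat mul1n.
  have := D_fact k.+2; rewrite factS factS factS; have := fact_gt0 k.+1.
  move: (D k.+4) (k.+1`!) => d f; nia.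
move: h; rewrite ler_norml => /andP[h1 h2].
apply/andP; split; lra.
Qed.
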